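(* Let $p,q>0$ and for $x,y\in\mathbb{R}$ and $f,g\in L^p(\mathbb{R}^d)$ set $h_p(x,y)=\sqrt{(|x|^p+|y|^p)|x-y|^p}$ and $H_p(f,g)=\sqrt{(\|f\|_p^p+\|g\|_p^p)\|f-g\|_p^p}$, where $\|f\|_p^p=\int_{\mathbb{R}^d}|f|^p$. Then: (i) for all $x,y\in\mathbb{R}$, $|x-y|^p\le\max(1,2^{\frac{p-1}{2}})h_p(x,y)$ and $|x^2-y^2|^{p/2}\le\max(1,2^{\frac{p-1}{2}})h_p(x,y)$; (ii) for all $f,g\in L^p(\mathbb{R}^d)$, $\int_{\mathbb{R}^d}h_p(f(\mathbf{r}),g(\mathbf{r}))\,\mathrm{d}\mathbf{r}\le H_p(f,g)$; (iii) for all $f,g\in L^p(\mathbb{R}^d)\cap L^q(\mathbb{R}^d)$ and $\lambda\in[0,1]$, $H_{\lambda p+(1-\lambda)q}(f,g)\le\sqrt{\lambda}\,H_p(f,g)+\sqrt{1-\lambda}\,H_q(f,g)$. *)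

(* Defs.v *)
From HB Require Import structures.
From mathcomp Require Import all_boot all_order all_algebra.
From mathcomp Require Import all_classical all_reals all_analysis.
Set Implicit Arguments. Unset Strict Implicit. Unset Printing Implicit Defensive.
Import Order.TTheory GRing.Theory Num.Theory.
Import numFieldNormedType.Exports.
Local Open Scope classical_set_scope.
Local Open Scope ring_scope.

(* R^d is modelled as d.-tuple R, with the product (= Borel) sigma-algebra
   generated by the coordinate projections (library instance). *)

(* mu is Lebesgue measure on R^d: it gives every closed box its volume.
   (This characterizes Lebesgue measure uniquely on the Borel sets.) *)
Definition is_lebesgue_Rd (R : realType) (d : nat)
    (mu : {measure set (d.-tuple R) -> \bar R}) : Prop :=
  forall a b : d.-tuple R, (forall i, tnth a i <= tnth b i) ->
    mu [set x | forall i, tnth a i <= tnth x i <= tnth b i] =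
    (\prod_(i < d) (tnth b i - tnth a i))%:E.

Definition inLp (R : realType) (d : nat)
    (mu : {measure set (d.-tuple R) -> \bar R}) (p : R)
    (f : d.-tuple R -> R) : Prop :=
  measurable_fun setT f /\ (\int[mu]_x ((`|f x| `^ p)%:E) < +oo)%E.

Definition normpp (R : realType) (d : nat)
    (mu : {measure set (d.-tuple R) -> \bar R}) (p : R)
    (f : d.-tuple R -> R) : R :=
  fine (\int[mu]_x ((`|f x| `^ p)%:E)).

Definition hp (R : realType) (p x y : R) : R :=
  Num.sqrt ((`|x| `^ p + `|y| `^ p) * `|x - y| `^ p).

Definition Hp (R : realType) (d : nat)
    (mu : {measure set (d.-tuple R) -> \bar R}) (p : R)
    (f g : d.-tuple R -> R) : R :=
  Num.sqrt ((normpp mu p f + normpp mu p g) * normpp mu p (f \- g)).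

(* Main.v *)
Require Import Defs.
From HB Require Import structures.
From mathcomp Require Import all_boot all_order all_algebra.
From mathcomp Require Import all_classical all_reals all_analysis.
From mathcomp.algebra_tactics Require Import ring lra.
From mathcomp Require Import measurable_realfun.
Import Order.TTheory GRing.Theory Num.Theory.
Import numFieldNormedType.Exports.
Local Open Scope classical_set_scope.
Local Open Scope ring_scope.

Section S.
Variable R : realType.
Local Open Scope convex_scope.

Definition half01 : {i01 R}.
refine (@Itv.mk _ _ _ (2^-1 : R) _).
rewrite /Itv.spec /= /Itv.num_sem /=.
apply/andP; split; first exact: num_real.
rewrite in_itv /=; apply/andP; split.
  by rewrite invr_ge0 ler0n.
by rewrite invf_le1 ?ler1n ?ltr0n.
Defined.
Lemma conv_half (a b p : R) : 0 <= a -> 0 <= b -> 1 <= p ->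
  (a + b) `^ p <= 2 `^ (p - 1) * (a `^ p + b `^ p).
Proof.
move=> a0 b0 p1.
have h := @convex_powR R p p1 half01 a b.
rewrite !inE /= !in_itv /= !andbT in h.
have {h} := h a0 b0.
have e1 : forall u v : R^o, u <|half01|> v = 2^-1 * u + 2^-1 * v.
  by move=> u v; rewrite convRE /= /unstable.onem; congr (_ + _ * _); field.
rewrite !e1 => h.
have e : a + b = 2 * (2^-1 * a + 2^-1 * b) by field.
rewrite e powRM // ?mulr_ge0 ?addr_ge0 ?mulr_ge0 //.
rewrite powRB ?pnatr_eq0 ?implybT // powRr1 //.
have h2 : (2^-1 * a + unstable.onem (2^-1:R) * b) `^ p <= 2^-1 * a `^ p + 2^-1 * b `^ p := h.
have e3 : unstable.onem (2^-1 : R) = 2^-1 by rewrite /unstable.onem; field.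
rewrite e3 -mulrDr in h2.
rewrite -mulrA ler_pM2l ?powR_gt0 // -mulrDr.
by rewrite [X in _ <= X]mulrDr.
Qed.

Lemma subadd_powR (a b p : R) : 0 <= a -> 0 <= b -> 0 < p -> p <= 1 ->
  (a + b) `^ p <= a `^ p + b `^ p.
Proof.
move=> a0 b0 p0 p1.
have [s0|s0] := eqVneq (a + b) 0.
  rewrite s0 powR0 ?gt_eqF //; exact: addr_ge0 (powR_ge0 _ _) (powR_ge0 _ _).
have sp : 0 < a + b by rewrite lt_neqAle eq_sym s0 addr_ge0.
have key : forall c, 0 <= c <= a + b -> (a + b) `^ p * (c / (a + b)) <= c `^ p.
  move=> c /andP[c0 cs].
  have e : c = (a + b) * (c / (a + b)) by field; rewrite gt_eqF.
  rewrite [X in _ <= X `^ _]e powRM; last 2 first.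
  - exact: ltW.
  - exact: divr_ge0 c0 (ltW sp).
  rewrite ler_pM2l ?powR_gt0 //.
  have [cz|cz] := eqVneq c 0.
    by rewrite cz mul0r powR_ge0.
  apply: ger1_powR => //; apply/andP; split.
    by rewrite divr_gt0 // lt_neqAle eq_sym cz c0.
  by rewrite ler_pdivrMr // mul1r.
have ha := key a; have hb := key b.
have : (a + b) `^ p * (a / (a + b)) + (a + b) `^ p * (b / (a + b)) <= a `^ p + b `^ p.
  apply: lerD; [apply: ha | apply: hb]; apply/andP; split => //;
    rewrite ?lerDl ?lerDr //.
rewrite -mulrDr -mulrDl divff ?mulr1 //; exact: gt_eqF.
Qed.

Lemma pow_bound (a b p : R) : 0 <= a -> 0 <= b -> 0 < p ->
  (a + b) `^ p <= Num.max 1 (2 `^ (p - 1)) * (a `^ p + b `^ p).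
Proof.
move=> a0 b0 p0.
have S0 : 0 <= a `^ p + b `^ p by rewrite addr_ge0 ?powR_ge0.
have [p1|p1] := leP 1 p.
  apply: le_trans (conv_half _ _ _ a0 b0 p1) _.
  by rewrite ler_wpM2r // le_max lexx orbT.
apply: le_trans (subadd_powR _ _ _ a0 b0 p0 (ltW p1)) _.
by rewrite -{1}(mul1r (_ + _)) ler_wpM2r // le_max lexx.
Qed.

Lemma C2_le (p : R) : Num.max 1 (2 `^ (p - 1)) <= Num.max 1 (2 `^ ((p - 1) / 2)) ^+ 2.
Proof.
set C := Num.max 1 (2 `^ ((p - 1) / 2)).
have C1 : 1 <= C by rewrite le_max lexx.
rewrite ge_max; apply/andP; split; first exact: exprn_ege1.
have -> : 2 `^ (p - 1) = (2 `^ ((p - 1) / 2)) ^+ 2.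
  by rewrite -powR_mulrn ?powR_ge0 // -powRrM mulfVK ?pnatr_eq0.
by rewrite lerXn2r ?nnegrE ?powR_ge0 ?(le_trans ler01) // /C le_max lexx orbT.
Qed.

Lemma part_i (p x y : R) : 0 < p ->
      `|x - y| `^ p <= Num.max 1 (2 `^ ((p - 1) / 2)) * hp p x y /\
      `|x ^+ 2 - y ^+ 2| `^ (p / 2) <= Num.max 1 (2 `^ ((p - 1) / 2)) * hp p x y.
Proof.
move=> p0.
set C := Num.max 1 _.
have C0 : 0 <= C by rewrite le_max ler01.
set S := `|x| `^ p + `|y| `^ p.
have S0 : 0 <= S by rewrite addr_ge0 ?powR_ge0.
have bnd : forall u : R, `|u| <= `|x| + `|y| -> Num.sqrt (`|u| `^ p) <= C * Num.sqrt S.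
  move=> u hu.
  rewrite -[in X in _ <= X](ger0_norm C0) -[`|C|]sqrtr_sqr -sqrtrM ?sqr_ge0 // ler_sqrt ?mulr_ge0 ?sqr_ge0 //.
  apply: le_trans (ge0_ler_powR (ltW p0) _ _ hu) _; rewrite ?nnegrE ?addr_ge0 //.
  apply: le_trans (pow_bound _ _ _ _ _ p0) _ => //.
  by rewrite ler_wpM2r // C2_le.
have hpE : hp p x y = Num.sqrt S * Num.sqrt (`|x - y| `^ p) by rewrite /hp sqrtrM.
have sq : forall u : R, `|u| `^ (p / 2) = Num.sqrt (`|u| `^ p).
  by move=> u; rewrite -powR12_sqrt ?powR_ge0 // -powRrM.
have D1 : `|x - y| <= `|x| + `|y| by rewrite ler_normB.
have D2 : `|x + y| <= `|x| + `|y| by rewrite ler_normD.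
split.
  rewrite -{1}(sqr_sqrtr (powR_ge0 `|x - y| p)) expr2 hpE mulrA.
  by rewrite ler_wpM2r ?sqrtr_ge0 // bnd.
have -> : x ^+ 2 - y ^+ 2 = (x + y) * (x - y) by ring.
rewrite normrM powRM // sq sq hpE mulrA ler_wpM2r ?sqrtr_ge0 //.
exact: bnd.
Qed.

Lemma final_real (l Af Ag Ad Pf Pg Pd Qf Qg Qd : R) :
  0 < l -> l < 1 -> 0 <= Af -> 0 <= Ag -> 0 <= Ad ->
  0 <= Pf -> 0 <= Pg -> 0 <= Pd -> 0 <= Qf -> 0 <= Qg -> 0 <= Qd ->
  Af <= Pf `^ l * Qf `^ (1 - l) -> Ag <= Pg `^ l * Qg `^ (1 - l) ->
  Ad <= Pd `^ l * Qd `^ (1 - l) ->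
  Num.sqrt ((Af + Ag) * Ad) <=
    Num.sqrt l * Num.sqrt ((Pf + Pg) * Pd) + Num.sqrt (1 - l) * Num.sqrt ((Qf + Qg) * Qd).
Proof.
move=> lp lq Af0 Ag0 Ad0 Pf0 Pg0 Pd0 Qf0 Qg0 Qd0 hf hg hd.
have b0 : 0 < 1 - l by rewrite subr_gt0.
have li : 0 < l^-1 by rewrite invr_gt0.
have bi : 0 < (1 - l)^-1 by rewrite invr_gt0.
have hA : Af + Ag <= (Pf + Pg) `^ l * (Qf + Qg) `^ (1 - l).
  apply: le_trans (lerD hf hg) _.
  have := hoelder2 (powR_ge0 Pf l) (powR_ge0 Pg l) (powR_ge0 Qf (1 - l))
    (powR_ge0 Qg (1 - l)) li bi.
  rewrite !invrK subrKC => /(_ erefl).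
  by rewrite -!powRrM !mulfV ?gt_eqF // !powRr1 // addr_ge0.
have Ap0 : 0 <= Pf + Pg by rewrite addr_ge0.
have Aq0 : 0 <= Qf + Qg by rewrite addr_ge0.
set Ap := Pf + Pg in hA Ap0 *; set Aq := Qf + Qg in hA Aq0 *.
have step1 : Num.sqrt ((Af + Ag) * Ad) <=
    Num.sqrt (Ap * Pd) `^ l * Num.sqrt (Aq * Qd) `^ (1 - l).
  apply: le_trans (_ : Num.sqrt ((Ap `^ l * Aq `^ (1 - l)) * (Pd `^ l * Qd `^ (1 - l))) <= _).
    rewrite ler_sqrt ?mulr_ge0 ?powR_ge0 //.
    by apply: ler_pM => //; rewrite addr_ge0.
  rewrite mulrACA -!powRM // sqrtrM ?powR_ge0 //.
  by rewrite -!powR12_sqrt ?powR_ge0 ?mulr_ge0 // !(powRAC _ 2^-1).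
apply: le_trans step1 _.
set Hq := Num.sqrt (Aq * Qd); set Hpp := Num.sqrt (Ap * Pd).
have H1 : 0 <= Hpp by exact: sqrtr_ge0.
have H2 : 0 <= Hq by exact: sqrtr_ge0.
have := conjugate_powR (powR_ge0 Hpp l) (powR_ge0 Hq (1 - l)) li bi.
rewrite !invrK subrKC => /(_ erefl).
rewrite -!powRrM !mulfV ?gt_eqF // !powRr1 // => Y.
apply: le_trans Y _.
have sq : forall t : R, 0 <= t <= 1 -> t <= Num.sqrt t.
  move=> t /andP[t0 t1].
  rewrite -{1}(sqr_sqrtr t0) expr2 ler_piMl ?sqrtr_ge0 //.
  by rewrite -sqrtr1 ler_sqrt.
rewrite (mulrC Hpp) (mulrC Hq).
apply: lerD; apply: ler_wpM2r => //; apply: sq.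
  by rewrite (ltW lp) (ltW lq).
by rewrite subr_ge0 (ltW lq) lerBlDr lerDl (ltW lp).
Qed.
End S.
Section K.
Variable R : realType.
Variables (dd : measure_display) (T : measurableType dd) (mu : {measure set T -> \bar R}).

Lemma Lnorm_pow (F : T -> R) (a I : R) : 0 < a -> (forall x, 0 <= F x) ->
  (\int[mu]_x (F x)%:E = I%:E)%E ->
  Lnorm mu (a^-1)%:E (EFin \o (fun x => F x `^ a)) = (I `^ a)%:E.
Proof.
move=> a0 F0 HI.
rewrite unlock /=.
under eq_integral => x _.
  rewrite /= ger0_norm ?powR_ge0 // -powRrM mulfV ?gt_eqF // powRr1 //.
  over.
by rewrite HI invrK.
Qed.

Lemma key_hoelder (F G : T -> R) (a I J : R) :
  measurable_fun setT F -> measurable_fun setT G ->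
  (forall x, 0 <= F x) -> (forall x, 0 <= G x) ->
  0 < a -> a < 1 ->
  (\int[mu]_x (F x)%:E = I%:E)%E -> (\int[mu]_x (G x)%:E = J%:E)%E ->
  (\int[mu]_x (F x `^ a * G x `^ (1 - a))%:E <= (I `^ a * J `^ (1 - a))%:E)%E.
Proof.
move=> mF mG F0 G0 a0 a1 HI HJ.
have b0 : 0 < 1 - a by rewrite subr_gt0.
have mf : measurable_fun setT (fun x => F x `^ a).
  exact: (measurableT_comp (measurable_powR a) mF).
have mg : measurable_fun setT (fun x => G x `^ (1 - a)).
  exact: (measurableT_comp (measurable_powR (1 - a)) mG).
have ai : 0 < a^-1 by rewrite invr_gt0.
have bi : 0 < (1 - a)^-1 by rewrite invr_gt0.
have := hoelder mu mf mg ai bi.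
rewrite !invrK subrKC => /(_ erefl).
rewrite (Lnorm_pow _ _ _ a0 F0 HI) (Lnorm_pow _ _ _ b0 G0 HJ) Lnorm1 -EFinM.
apply: le_trans; apply: ge0_le_integral => //.
- by move=> x _; rewrite lee_fin mulr_ge0 ?powR_ge0.
- apply: measurableT_comp => //; exact: measurable_funM.
- apply: measurableT_comp => //; apply: measurableT_comp => //; exact: measurable_funM.
- by move=> x _ /=; rewrite lee_fin ler_norm.
Qed.
End K.

Section M.
Variables (R : realType) (d : nat) (mu : {measure set (d.-tuple R) -> \bar R}).

Lemma mpow (f : d.-tuple R -> R) (p : R) : measurable_fun setT f ->
  measurable_fun setT (fun x => `|f x| `^ p).
Proof.
move=> mf; apply: (measurableT_comp (measurable_powR p)).
exact: measurableT_comp.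
Qed.

Lemma mpowE (f : d.-tuple R -> R) (p : R) : measurable_fun setT f ->
  measurable_fun setT (fun x => (`|f x| `^ p)%:E).
Proof. by move=> mf; apply/measurable_EFinP; exact: mpow. Qed.

Lemma int_normpp p f : inLp mu p f ->
  (\int[mu]_x (`|f x| `^ p)%:E = (normpp mu p f)%:E)%E.
Proof.
case=> _ If; rewrite /normpp fineK // ge0_fin_numE //.
by apply: integral_ge0 => x _; rewrite lee_fin powR_ge0.
Qed.

Lemma normpp_ge0 p f : 0 <= normpp mu p f.
Proof.
by apply: fine_ge0; apply: integral_ge0 => x _; rewrite lee_fin powR_ge0.
Qed.

Lemma inLp_sub p f g : 0 < p -> inLp mu p f -> inLp mu p g -> inLp mu p (f \- g).
Proof.
move=> p0 [mf If] [mg Ig]; split; first exact: measurable_funB.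
set C := Num.max 1 (2 `^ (p - 1)).
have C0 : 0 <= C by rewrite le_max ler01.
have le1 : (\int[mu]_x (`|(f \- g) x| `^ p)%:E <=
    \int[mu]_x (C%:E * ((`|f x| `^ p)%:E + (`|g x| `^ p)%:E)))%E.
  apply: ge0_le_integral => //.
  - apply: mpowE; exact: measurable_funB.
  - apply: measurable_funeM; apply: emeasurable_funD; exact: mpowE.
  - move=> x _; rewrite -EFinD -EFinM lee_fin /=.
    have hb := pow_bound _ `|f x| `|g x| p (normr_ge0 _) (normr_ge0 _) p0.
    apply: (le_trans _ hb).
    by apply: ge0_ler_powR; rewrite ?nnegrE ?addr_ge0 ?(ltW p0) // ler_normB.
apply: le_lt_trans le1 _.
rewrite ge0_integralZl_EFin //; first last.
- by apply: emeasurable_funD; exact: mpowE.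
- by move=> x ?; rewrite adde_ge0 // lee_fin powR_ge0.
rewrite ge0_integralD //.
all: try (by move=> x ?; rewrite lee_fin powR_ge0).
all: try exact: mpowE.
rewrite lte_mul_pinfty // ?lee_fin //.
by rewrite lte_add_pinfty.
Qed.

Lemma part_ii p f g : 0 < p -> inLp mu p f -> inLp mu p g ->
  (\int[mu]_r ((hp p (f r) (g r))%:E) <= (Hp mu p f g)%:E)%E.
Proof.
move=> p0 Lf Lg.
have Ld := inLp_sub _ _ _ p0 Lf Lg.
case: (Lf) => mf _; case: (Lg) => mg _; case: (Ld) => md _.
have h2 : (1 - 2^-1 : R) = 2^-1 by field.
have eq : forall r, hp p (f r) (g r) =
    (`|f r| `^ p + `|g r| `^ p) `^ 2^-1 * (`|(f \- g) r| `^ p) `^ (1 - 2^-1).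
  move=> r; rewrite h2 -powRM ?addr_ge0 ?powR_ge0 //.
  by rewrite powR12_sqrt // mulr_ge0 ?addr_ge0 ?powR_ge0.
under eq_integral do rewrite eq.
have K := key_hoelder _ _ _ mu (fun r => `|f r| `^ p + `|g r| `^ p)
  (fun r => `|(f \- g) r| `^ p) (2^-1) (normpp mu p f + normpp mu p g)
  (normpp mu p (f \- g)).
apply: le_trans (K _ _ _ _ _ _ _ _) _.
- by apply: measurable_funD; exact: mpow.
- exact: mpow.
- by move=> x; rewrite addr_ge0 ?powR_ge0.
- by move=> x; rewrite powR_ge0.
- by rewrite invr_gt0.
- by rewrite invf_lt1 ?ltr1n.
- under eq_integral do rewrite EFinD.
  rewrite ge0_integralD //.
  all: try (by move=> x ?; rewrite lee_fin powR_ge0).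
  all: try exact: mpowE.
  by rewrite !int_normpp.
- exact: int_normpp.
rewrite lee_fin /Hp h2 -powRM ?addr_ge0 ?normpp_ge0 //.
by rewrite powR12_sqrt // mulr_ge0 ?addr_ge0 ?normpp_ge0.
Qed.

Lemma lyap p q l h : 0 < p -> 0 < q -> 0 < l -> l < 1 ->
  inLp mu p h -> inLp mu q h ->
  normpp mu (l * p + (1 - l) * q) h <=
    normpp mu p h `^ l * normpp mu q h `^ (1 - l).
Proof.
move=> p0 q0 l0 l1 Lp Lq.
case: (Lp) => mh _.
have b0 : 0 < 1 - l by rewrite subr_gt0.
have pw : forall x, `|h x| `^ (l * p + (1 - l) * q) =
    (`|h x| `^ p) `^ l * (`|h x| `^ q) `^ (1 - l).
  move=> x; rewrite -!powRrM (mulrC p) (mulrC q) powRD //.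
  by rewrite gt_eqF // addr_gt0 // mulr_gt0.
have K := key_hoelder _ _ _ mu (fun x => `|h x| `^ p) (fun x => `|h x| `^ q)
  l (normpp mu p h) (normpp mu q h) (mpow _ _ mh) (mpow _ _ mh)
  (fun x => powR_ge0 _ _) (fun x => powR_ge0 _ _) l0 l1 (int_normpp _ _ Lp) (int_normpp _ _ Lq).
rewrite /normpp.
under eq_integral do rewrite pw.
have I0 : (0 <= \int[mu]_x ((`|h x| `^ p) `^ l * (`|h x| `^ q) `^ (1 - l))%:E)%E.
  by apply: integral_ge0 => x ?; rewrite lee_fin mulr_ge0 ?powR_ge0.
have fin : (\int[mu]_x ((`|h x| `^ p) `^ l * (`|h x| `^ q) `^ (1 - l))%:E)%E \is a fin_num.
  by rewrite ge0_fin_numE // (le_lt_trans K) ?ltry.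
by rewrite -lee_fin fineK.
Qed.

Lemma part_iii p q f g l : 0 < p -> 0 < q ->
      inLp mu p f -> inLp mu q f -> inLp mu p g -> inLp mu q g ->
      0 <= l -> l <= 1 ->
      Hp mu (l * p + (1 - l) * q) f g <=
        Num.sqrt l * Hp mu p f g + Num.sqrt (1 - l) * Hp mu q f g.
Proof.
move=> p0 q0 Lpf Lqf Lpg Lqg l0 l1.
have [->|l0'] := eqVneq l 0.
  by rewrite mul0r subr0 mul1r add0r sqrtr0 mul0r add0r sqrtr1 mul1r.
have [->|l1'] := eqVneq l 1.
  by rewrite mul1r subrr mul0r addr0 sqrtr1 mul1r sqrtr0 mul0r addr0.
have lp : 0 < l by rewrite lt_neqAle eq_sym l0' l0.
have lq : l < 1 by rewrite lt_neqAle l1' l1.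
have b0 : 0 < 1 - l by rewrite subr_gt0.
have Lpd := inLp_sub _ _ _ p0 Lpf Lpg.
have Lqd := inLp_sub _ _ _ q0 Lqf Lqg.
have hf := lyap _ _ _ _ p0 q0 lp lq Lpf Lqf.
have hg := lyap _ _ _ _ p0 q0 lp lq Lpg Lqg.
have hd := lyap _ _ _ _ p0 q0 lp lq Lpd Lqd.
rewrite /Hp.
apply: (final_real R _ _ _ _ _ _ _ _ _ _ lp lq _ _ _ _ _ _ _ _ _ hf hg hd); exact: normpp_ge0.
Qed.
End M.

Theorem lemma3p11 (R : realType) (d : nat)
    (mu : {measure set (d.-tuple R) -> \bar R}) (Hmu : is_lebesgue_Rd mu)
    (p q : R) (hp0 : 0 < p) (hq0 : 0 < q) :
  (* (i) *)
  (forall x y : R,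
      `|x - y| `^ p <= Num.max 1 (2 `^ ((p - 1) / 2)) * hp p x y /\
      `|x ^+ 2 - y ^+ 2| `^ (p / 2) <= Num.max 1 (2 `^ ((p - 1) / 2)) * hp p x y) /\
  (* (ii) *)
  (forall f g : d.-tuple R -> R, inLp mu p f -> inLp mu p g ->
      (\int[mu]_r ((hp p (f r) (g r))%:E) <= (Hp mu p f g)%:E)%E) /\
  (* (iii) *)
  (forall (f g : d.-tuple R -> R) (l : R),
      inLp mu p f -> inLp mu q f -> inLp mu p g -> inLp mu q g ->
      0 <= l -> l <= 1 ->
      Hp mu (l * p + (1 - l) * q) f g <=
        Num.sqrt l * Hp mu p f g + Num.sqrt (1 - l) * Hp mu q f g).
Proof.
split; first by move=> x y; exact: part_i.
split; first by move=> f g; exact: part_ii.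
by move=> f g l; exact: part_iii.
Qed.
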